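(* Let $n\ge1$, $k\in\{1,\dots,n\}$, scores $s_1,\dots,s_n\in\mathbb{R}$ not all equal, $p=\frac{n-k}{n}+\frac{1}{2n}$ and $f(x)=\sum_{i=1}^n\rho_p(s_i-x)$. If $x\in\mathbb{R}$ satisfies $f(x)-f(\theta_k)\le \frac{g_m\Delta}{2}$, where $g_m=\min\{\overline{m}-\frac12,\ \underline{m}+\frac12\}$, then $|x-\theta_k|\le\frac{\Delta}{2}$.
   Context: The pinball loss is $\rho_p(x)=p\,x$ if $x\ge0$ and $\rho_p(x)=-(1-p)x$ if $x<0$. The scores sorted in descending order are $\theta_1\ge\cdots\ge\theta_n$; $\theta_k$ is the $k$-th largest score. $\overline{m}$ is the number of indices $j\le k$ with $\theta_j=\theta_k$, and $\underline{m}$ is the number of indices $j>k$ with $\theta_j=\theta_k$. The minimum gap is $\Delta=\min\{|s_i-\theta_k|: s_i\ne\theta_k\}$. *)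

(* Defs.v *)
From HB Require Import structures.
From mathcomp Require Import all_boot all_order all_algebra.
Set Implicit Arguments. Unset Strict Implicit. Unset Printing Implicit Defensive.
Import Order.TTheory GRing.Theory Num.Theory.
Local Open Scope ring_scope.

Section Defs.
Variable R : realFieldType.

Definition pinball (p x : R) : R := if 0 <= x then p * x else - ((1 - p) * x).

Definition sorted_scores n (s : 'I_n -> R) : seq R :=
  sort (fun a b => b <= a) [seq s i | i <- enum 'I_n].

(* theta_j, 1-indexed (theta j = the j-th largest score) *)
Definition theta n (s : 'I_n -> R) (j : nat) : R := nth 0 (sorted_scores s) j.-1.

Definition mbar n (s : 'I_n -> R) (k : nat) : nat :=
  count (fun j => theta s j == theta s k) (iota 1 k).

Definition munder n (s : 'I_n -> R) (k : nat) : nat :=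
  count (fun j => theta s j == theta s k) (iota k.+1 (n - k)).

(* Delta = min { |s_i - theta_k| : s_i <> theta_k }.
   The minimum is taken with initial value the maximum of all |s_i - theta_k|,
   which does not change the value when the index set is nonempty. *)
Definition Delta n (s : 'I_n -> R) (k : nat) : R :=
  let t := theta s k in
  \big[Num.min/ \big[Num.max/0]_(i < n) `|s i - t| ]_(i < n | s i != t) `|s i - t|.

Definition qloss n (s : 'I_n -> R) (p x : R) : R := \sum_(i < n) pinball p (s i - x).

End Defs.

(* Main.v *)
Require Import Defs.
From HB Require Import structures.
From mathcomp Require Import all_boot all_order all_algebra.
From mathcomp Require Import ring lra zify.
Import Order.TTheory GRing.Theory Num.Theory.
Local Open Scope ring_scope.

Section Comb.
Variables (R : realFieldType) (n k : nat) (s : 'I_n -> R).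
Hypothesis hk : (1 <= k <= n)%N.
Let L := sorted_scores s.
Let a := nth 0 L.
Let t := a k.-1.

Lemma sizeL : size L = n.
Proof. by rewrite /L /sorted_scores size_sort size_map size_enum_ord. Qed.

Lemma sortedL i j : (i <= j < n)%N -> a j <= a i.
Proof.
case/andP=> hij hj.
have hs : sorted (fun a b : R => b <= a) L.
  apply: sort_sorted => u v; exact: le_total.
have := sorted_leq_nth (fun y x z (h1 : y <= x) (h2 : z <= y) => le_trans h2 h1)
  (fun u : R => lexx u) 0 hs.
apply; rewrite ?inE ?sizeL //; exact: leq_ltn_trans hij hj.
Qed.

Lemma thetaE j : theta s j = a j.-1.
Proof. by []. Qed.

Lemma Lmap : L = map a (iota 0 n).
Proof. by rewrite -sizeL /a -/(mkseq _ _) mkseq_nth. Qed.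

Lemma mbarE : mbar s k = count (fun j => a j == t) (iota 0 k).
Proof.
by rewrite /mbar -addn1 addnC iotaDl count_map; apply: eq_count => j /=;
 rewrite /theta add1n.
Qed.

Lemma munderE : munder s k = count (fun j => a j == t) (iota k (n - k)).
Proof.
rewrite /munder -addn1 addnC iotaDl count_map; apply: eq_count => j /=.
by rewrite /theta add1n.
Qed.

Lemma countA : (n - k + mbar s k <= count (fun y : R => (y <= t)%R) L)%N.
Proof.
case/andP: hk => k1 kn.
rewrite Lmap count_map mbarE -(subnKC kn) iotaD count_cat add0n subnKC // addnC.
apply: leq_add.
  apply: sub_count => j /= /eqP ->; exact: lexx.
rewrite -{1}(size_iota k (n - k)) -count_predT leq_eqVlt; apply/orP; left; apply/eqP.
apply: eq_in_count => j; rewrite mem_iota => hj /=.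
symmetry; apply: sortedL; lia.
Qed.

Lemma countB : (count (fun y : R => (y < t)%R) L + munder s k <= n - k)%N.
Proof.
case/andP: hk => k1 kn.
rewrite Lmap count_map munderE -(subnKC kn) iotaD count_cat add0n subnKC //.
have -> : count (preim a (fun y : R => (y < t)%R)) (iota 0 k) = 0%N.
  apply/eqP; rewrite eqn0Ngt -has_count; apply/hasPn => j; rewrite mem_iota => hj /=.
  rewrite -leNgt; apply: sortedL; lia.
rewrite add0n -{3}(size_iota k (n - k)) -count_predUI.
have -> : count (predI (preim a (fun y : R => (y < t)%R)) (fun j => a j == t)) (iota k (n - k)) = 0%N.
  apply/eqP; rewrite eqn0Ngt -has_count; apply/hasPn => j _ /=.
  by case: eqP => [->|]; rewrite ?ltxx ?andbF ?andbT.
by rewrite addn0 count_size.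
Qed.

Lemma mbar_ge1 : (1 <= mbar s k)%N.
Proof.
case/andP: hk => k1 kn.
rewrite mbarE -has_count; apply/hasP; exists k.-1; last exact: eqxx.
rewrite mem_iota; lia.
Qed.
End Comb.
Lemma pinball_ge (R : realFieldType) (p s x t : R) (b : bool) : 0 <= p -> p <= 1 ->
  (b -> s <= t) -> (~~ b -> t <= s) ->
  (b%:R - p) * (x - t) <= pinball p (s - x) - pinball p (s - t).
Proof.
move=> p0 p1; rewrite /pinball; case: b => /= [/(_ isT) h _|_ /(_ isT) h];
case: ifP => h1; case: ifP => h2; rewrite ?h1 ?h2 //=; nra.
Qed.

Lemma sum_count (R : realFieldType) (T : Type) (r : seq T) (b : pred T) :
  \sum_(i <- r) (b i)%:R = (count b r)%:R :> R.
Proof.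
elim: r => [|a r IH]; first by rewrite big_nil.
by rewrite big_cons IH /= natrD.
Qed.

Lemma qloss_ge (R : realFieldType) n (s : 'I_n -> R) (p x t : R) (b : pred R) :
  0 <= p -> p <= 1 -> (forall y, b y -> y <= t) -> (forall y, ~~ b y -> t <= y) ->
  ((count b (sorted_scores s))%:R - n%:R * p) * (x - t) <= qloss s p x - qloss s p t.
Proof.
move=> p0 p1 h1 h2.
have -> : count b (sorted_scores s) = count b [seq s i | i <- enum 'I_n].
  have hp : perm_eq (sorted_scores s) [seq s i | i <- enum 'I_n] by rewrite /sorted_scores perm_sort.
  exact: (permP hp b).
rewrite count_map -sum_count big_enum /=.
have -> : n%:R * p = \sum_(i < n) p by rewrite sumr_const card_ord mulr_natl.
rewrite -sumrB mulr_suml.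
rewrite /qloss -sumrB; apply: ler_sum => i _.
by apply: pinball_ge => //; [apply: h1 | apply: h2].
Qed.

Theorem corollary1 (R : realFieldType) (n k : nat) (s : 'I_n -> R) (x : R) :
  (1 <= n)%N -> (1 <= k <= n)%N ->
  (exists i j, s i != s j) ->
  let p := (n - k)%:R / n%:R + 1 / (2 * n%:R) in
  let f := qloss s p in
  let gm := Num.min ((mbar s k)%:R - 1 / 2) ((munder s k)%:R + 1 / 2) in
  f x - f (theta s k) <= gm * Delta s k / 2 ->
  `|x - theta s k| <= Delta s k / 2.
Proof.
move=> n1 hk _ p f gm hf.
have A := @countA _ _ _ s hk; have B := @countB _ _ _ s hk; have M := @mbar_ge1 _ _ _ s hk.
move: A B hf; rewrite -/(theta s k) /f.
set t := theta s k; set D := Delta s k.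
set N1 := count _ _; set N2 := count _ _ => A B hf.
have kn : (k <= n)%N by case/andP: hk.
have k1 : (1 <= k)%N by case/andP: hk.
have A' : n%:R - k%:R + (mbar s k)%:R <= N1%:R :> R.
  by rewrite -natrB // -natrD ler_nat.
have B' : N2%:R + (munder s k)%:R <= n%:R - k%:R :> R.
  by rewrite -natrB // -natrD ler_nat.
have M' : 1 <= (mbar s k)%:R :> R by rewrite ler1n.
have K' : 1 <= k%:R :> R by rewrite ler1n.
have U' : 0 <= (munder s k)%:R :> R by rewrite ler0n.
have nK : k%:R <= n%:R :> R by rewrite ler_nat.
have n0 : 0 < n%:R :> R by rewrite ltr0n.
have hp : n%:R * p = n%:R - k%:R + 1/2.
  rewrite /p natrB //; field; rewrite pnatr_eq0 -lt0n //.
have p0 : 0 <= p by nra.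
have p1 : p <= 1 by nra.
have h2 : forall y, ~~ (y <= t) -> t <= y by move=> y; rewrite -ltNge => /ltW.
have h3 : forall y, ~~ (y < t) -> t <= y by move=> y; rewrite -leNgt.
have q1 := @qloss_ge R n s p x t (fun y => y <= t) p0 p1 (fun y h => h) h2.
have q2 := @qloss_ge R n s p x t (fun y => y < t) p0 p1 (fun y h => ltW h) h3.
have gm1 : gm <= (mbar s k)%:R - 1 / 2 by rewrite /gm ge_min lexx.
have gm2 : gm <= (munder s k)%:R + 1 / 2 by rewrite /gm ge_min lexx orbT.
have gm0 : 0 < gm by rewrite /gm lt_min; apply/andP; split; lra.
rewrite leNgt; apply/negP => H.
case: (lerP t x) => hx.
  rewrite ger0_norm ?subr_ge0 // in H.
  nra.
rewrite ler0_norm ?subr_le0 ?ltW // in H.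
nra.
Qed.
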